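(* Let $f(x)=\frac1n\sum_{i=1}^n f_i(x)$ on $\mathbb{R}^d$, where each $f_i$ is differentiable, lower bounded and $L_i$-smooth, $L_{\max}=\max_iL_i$, and assume $f$ is $\mu$-PL ($\mu>0$). Fix $\lambda\in[0,1]$ and consider deterministic Unified SAM $$x^{t+1}=x^t-\gamma\,\nabla f\!\left(x^t+\rho\left(1-\lambda+\frac{\lambda}{\|\nabla f(x^t)\|}\right)\nabla f(x^t)\right)$$ with $\rho\le\frac{1}{L_{\max}(1+2(1-\lambda)^2)}$ and $\gamma\le\frac{1-L_{\max}\rho(1+2(1-\lambda)^2)}{2L_{\max}[2L_{\max}^2\rho^2(1-\lambda)^2+1]}$. Then for all $t\ge0$ $$f(x^t)-f(x^* )\le(1-\gamma\mu)^t[f(x^0)-f(x^* )]+\frac{L_{\max}\rho(1+2\gamma L_{\max}^2\rho)\lambda^2}{\mu}.$$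
   Context: Each $f_i$ is $L_i$-smooth: $\|\nabla f_i(x)-\nabla f_i(y)\|\le L_i\|x-y\|$. The set of minimizers of $f$ is nonempty and $x^*$ is a minimizer. $f$ is $\mu$-PL if $\|\nabla f(x)\|^2\ge 2\mu(f(x)-f(x^* ))$ for all $x$. The deterministic method is the full-batch case of Unified SAM, i.e. the stochastic gradient is the exact gradient $\nabla f$. *)

(* Defs.v *)
From HB Require Import structures.
From mathcomp Require Import all_boot all_order all_algebra.
From mathcomp Require Import all_classical all_reals.
From mathcomp Require Import topology normedtype derive.
Set Implicit Arguments. Unset Strict Implicit. Unset Printing Implicit Defensive.
Import Order.TTheory GRing.Theory Num.Theory.
Import numFieldNormedType.Exports.
Local Open Scope ring_scope.

Definition dotv (R : realType) (d : nat) (u v : 'rV[R]_d) : R :=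
  \sum_(i < d) u 0 i * v 0 i.

Definition enorm (R : realType) (d : nat) (u : 'rV[R]_d) : R :=
  Num.sqrt (dotv u u).

Definition is_gradient (R : realType) (d : nat)
  (h : 'rV[R]_d -> R) (g : 'rV[R]_d -> 'rV[R]_d) : Prop :=
  forall x, differentiable h x /\ forall v, ('d h x : 'rV[R]_d -> R) v = dotv (g x) v.

Definition smooth_grad (R : realType) (d : nat) (g : 'rV[R]_d -> 'rV[R]_d) (L : R) : Prop :=
  forall x y, enorm (g x - g y) <= L * enorm (x - y).

Definition lower_bounded (R : realType) (d : nat) (h : 'rV[R]_d -> R) : Prop :=
  exists b : R, forall x, b <= h x.

Definition PL (R : realType) (d : nat) (h : 'rV[R]_d -> R) (g : 'rV[R]_d -> 'rV[R]_d)
  (mu : R) (xstar : 'rV[R]_d) : Prop :=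
  forall x, enorm (g x) ^+ 2 >= 2 * mu * (h x - h xstar).

(* One step of deterministic Unified SAM (convention 0^-1 = 0: when the
   gradient vanishes, the perturbation is 0 anyway). *)
Definition usam_step (R : realType) (d : nat) (g : 'rV[R]_d -> 'rV[R]_d)
  (gamma rho lambda : R) (x : 'rV[R]_d) : 'rV[R]_d :=
  x - gamma *: g (x + (rho * (1 - lambda + lambda / enorm (g x))) *: g x).

(* Main.v *)
Require Import Defs.
From HB Require Import structures.
From mathcomp Require Import all_boot all_order all_algebra.
From mathcomp Require Import all_classical all_reals.
From mathcomp Require Import topology normedtype derive.
From mathcomp Require Import ring lra.
Import Order.TTheory GRing.Theory Num.Theory.
Import numFieldNormedType.Exports.
Local Open Scope ring_scope.

Section Dot.
Context {R : realType} {d : nat}.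
Implicit Types u v w : 'rV[R]_d.

Lemma scR (a b : R) : a *: b = a * b.
Proof. by []. Qed.

Lemma dotvC u v : dotv u v = dotv v u.
Proof. by apply: eq_bigr => i _; rewrite mulrC. Qed.

Lemma dotvDl u v w : dotv (u + v) w = dotv u w + dotv v w.
Proof. by rewrite /dotv -big_split; apply: eq_bigr => i _; rewrite !mxE mulrDl. Qed.

Lemma dotvNl u w : dotv (- u) w = - dotv u w.
Proof. by rewrite /dotv -sumrN; apply: eq_bigr => i _; rewrite !mxE mulNr. Qed.

Lemma dotvBl u v w : dotv (u - v) w = dotv u w - dotv v w.
Proof. by rewrite dotvDl dotvNl. Qed.

Lemma dotvZl a u w : dotv (a *: u) w = a * dotv u w.
Proof. by rewrite /dotv mulr_sumr; apply: eq_bigr => i _; rewrite !mxE mulrA. Qed.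

Lemma dotvDr u v w : dotv w (u + v) = dotv w u + dotv w v.
Proof. by rewrite !(dotvC w) dotvDl. Qed.
Lemma dotvNr u w : dotv w (- u) = - dotv w u.
Proof. by rewrite !(dotvC w) dotvNl. Qed.
Lemma dotvBr u v w : dotv w (u - v) = dotv w u - dotv w v.
Proof. by rewrite !(dotvC w) dotvBl. Qed.
Lemma dotvZr a u w : dotv w (a *: u) = a * dotv w u.
Proof. by rewrite !(dotvC w) dotvZl. Qed.

Lemma dotv_ge0 u : 0 <= dotv u u.
Proof. by apply: sumr_ge0 => i _; rewrite -expr2 sqr_ge0. Qed.

Lemma dotv_eq0 u : dotv u u = 0 -> forall v, dotv u v = 0.
Proof.
move=> /eqP; rewrite psumr_eq0; last by move=> i _; rewrite -expr2 sqr_ge0.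
move=> /allP H v; apply: big1 => i _.
have /implyP := H i (mem_index_enum _); rewrite mulf_eq0 orbb => /(_ isT) /eqP ->.
by rewrite mul0r.
Qed.

Lemma enorm_ge0 u : 0 <= enorm u.
Proof. exact: sqrtr_ge0. Qed.

Lemma enorm_sqr u : enorm u ^+ 2 = dotv u u.
Proof. by rewrite sqr_sqrtr // dotv_ge0. Qed.

Lemma enormN u : enorm (- u) = enorm u.
Proof. by rewrite /enorm dotvNl dotvNr opprK. Qed.

Lemma enormZ a u : enorm (a *: u) = `|a| * enorm u.
Proof.
by rewrite /enorm dotvZl dotvZr mulrA -expr2 sqrtrM ?sqr_ge0 // sqrtr_sqr.
Qed.

Lemma CS u v : dotv u v <= enorm u * enorm v.
Proof.
have [A0|Apos] := eqVneq (enorm u) 0.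
  have : dotv u u = 0 by rewrite -enorm_sqr A0 expr0n.
  by move/dotv_eq0 => ->; rewrite A0 mul0r.
have [B0|Bpos] := eqVneq (enorm v) 0.
  have : dotv v v = 0 by rewrite -enorm_sqr B0 expr0n.
  by move/dotv_eq0 => H; rewrite dotvC H B0 mulr0.
set A := enorm u in Apos *; set B := enorm v in Bpos *.
have A0 : 0 < A by rewrite lt_neqAle eq_sym Apos enorm_ge0.
have B0 : 0 < B by rewrite lt_neqAle eq_sym Bpos enorm_ge0.
have key : 0 <= dotv (B *: u - A *: v) (B *: u - A *: v) by apply: dotv_ge0.
rewrite !(dotvBl, dotvBr, dotvZl, dotvZr) -/A -/B in key.
rewrite -!enorm_sqr -/A -/B (dotvC v u) in key.
have : 2 * A * B * dotv u v <= 2 * A * B * (A * B) by nra.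
by rewrite ler_pM2l // !mulr_gt0.
Qed.

Lemma CSabs u v : - (enorm u * enorm v) <= dotv u v.
Proof. by rewrite lerNl -dotvNl -(enormN u) CS. Qed.

End Dot.

Section Descent.
Context {R : realType} {d : nat}.

Lemma diffid (s : R) : differentiable (@id R) s.
Proof. exact: (@ex_diff _ _ _ _ _ _ _ (is_diff_id s)). Qed.
Lemma dId (s : R) : 'd (@id R) s = id :> (R -> R).
Proof. exact: (@diff_val _ _ _ _ _ _ _ (is_diff_id s)). Qed.

Lemma psi_derive (h : 'rV[R]_d -> R) g (x v : 'rV[R]_d) (s : R) :
  is_gradient h g ->
  is_derive s 1 (fun t : R => h (t *: v + x)) (dotv (g (s *: v + x)) v).
Proof.
move=> hg.
have [dh dhv] := hg (s *: v + x).
have E : (fun t : R => t^-1 *: ((fun t : R => h (t *: v + x)) (t *: 1 + s) - (fun t : R => h (t *: v + x)) s))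
  = (fun t : R => t^-1 *: (h (t *: v + (s *: v + x)) - h (s *: v + x))).
  apply: funext => t /=; congr (_ *: (h _ - _)).
  by rewrite [_%:A]mulr1 scalerDl addrA.
have Hd : derivable h (s *: v + x) v by exact: diff_derivable.
apply: DeriveDef.
  by rewrite /derivable E.
by rewrite /derive E -/(derive h (s *: v + x) v) deriveE // dhv.
Qed.

Lemma descent (h : 'rV[R]_d -> R) g L : is_gradient h g -> smooth_grad g L -> 0 <= L ->
  forall x y, h y <= h x + dotv (g x) (y - x) + L / 2 * enorm (y - x) ^+ 2.
Proof.
move=> hg gL L0 x y.
set v := y - x; set c := dotv (g x) v; set K := L / 2 * dotv v v.
set psi := (fun t : R => h (t *: v + x)).
pose phi := psi - (c \*: (@id R) + K \*: ((@id R) * (@id R))).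
have Hphi : forall t : R, is_derive t (1:R) phi
   (dotv (g (t *: v + x)) v - (c%:A + K *: (t%:A + t%:A))).
  move=> t0.
  exact: (is_deriveB (psi_derive h g x v t0 hg) (is_deriveD (is_deriveZ c (is_derive_id t0 (1:R))) (is_deriveZ K (is_deriveM (is_derive_id t0 (1:R)) (is_derive_id t0 (1:R)))))).
have dphi : forall t : R, derivable phi t 1 by move=> t; have [] := Hphi t.
have le0 : forall t : R, t \in `]0, 1[ -> derive1 phi t <= 0.
  move=> t; rewrite in_itv /= => /andP [t0 t1].
  rewrite derive1E (@derive_val _ _ _ _ _ _ _ (Hphi t)).
  rewrite /c /K ![_%:A]mulr1 scR.
  have cs := CS (g (t *: v + x) - g x) v.
  rewrite dotvBl in cs.
  have sm := gL (t *: v + x) x.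
  rewrite addrK enormZ (ger0_norm (ltW t0)) in sm.
  have ev := enorm_ge0 v.
  have : enorm (g (t *: v + x) - g x) * enorm v <= L * (t * enorm v) * enorm v.
    nra.
  rewrite -enorm_sqr. nra.
have cphi := derivable_within_continuous (i := `[0, 1]%R) (fun t _ => dphi t).
have := ler0_derive1_le_cc (fun t _ => dphi t) le0 cphi.
move=> /(_ 1 0); rewrite !in_itv /= !lexx ler01 => /(_ isT isT isT).
change (h (1 *: v + x) - (c * 1 + K * (1 * 1)) <= h (0 *: v + x) - (c * 0 + K * (0 * 0)) -> h y <= h x + c + L / 2 * enorm v ^+ 2).
rewrite scale1r scale0r add0r /v subrK enorm_sqr -/v /K.
lra.
Qed.
End Descent.

Lemma grad_avg {R : realType} {d n : nat} (fi : 'I_n -> 'rV[R]_d -> R) gi f gf :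
  (forall i, is_gradient (fi i) (gi i)) ->
  f = (fun y => n%:R^-1 * \sum_(i < n) fi i y) ->
  is_gradient f gf ->
  forall x v, dotv (gf x) v = n%:R^-1 * \sum_(i < n) dotv (gi i x) v.
Proof.
move=> hgi fE hf x v.
have [df dfv] := hf x.
rewrite -dfv -deriveE //.
have E : f = n%:R^-1 \*: (\sum_(i < n) fi i).
  by rewrite fE; apply: funext => y /=; rewrite fct_sumE.
have dsum : forall i, derivable (fi i) x v.
  by move=> i; apply: diff_derivable; have [] := hgi i x.
rewrite E deriveZ; last by apply: derivable_sum.
rewrite derive_sum // scR; congr (_ * _); apply: eq_bigr => i _.
have [dfi dfiv] := hgi i x.
by rewrite deriveE // dfiv.
Qed.

Lemma mulLe {R : realType} {z x y : R} : 0 <= z -> x <= y -> z * x <= z * y.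
Proof. move=> hz hxy; have H := ler_wpM2l hz hxy; exact H. Qed.

Lemma real_step {R : realType} (G s P H2 L rho lambda gamma : R) :
  0 <= G -> 0 <= s -> - (G * s) <= P -> P <= G * s ->
  H2 = G ^+ 2 + 2 * P + s ^+ 2 ->
  s <= L * rho * (1 - lambda) * G + L * rho * lambda ->
  0 < L -> 0 <= rho -> 0 <= lambda -> lambda <= 1 -> 0 < gamma ->
  gamma * (2 * L * (2 * L ^+ 2 * rho ^+ 2 * (1 - lambda) ^+ 2 + 1))
     <= 1 - L * rho * (1 + 2 * (1 - lambda) ^+ 2) ->
  - gamma * (G ^+ 2 + P) + L / 2 * (gamma ^+ 2 * H2)
    <= - (gamma / 2) * G ^+ 2
       + gamma * (L * rho * (1 + 2 * gamma * L ^+ 2 * rho) * lambda ^+ 2).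
Proof.
move=> G0 s0 P1 P2 HE sb L0 r0 l0 l1 g0 gb.
set u := 1 - lambda.
set a := L * rho * u. set b := L * rho * lambda.
have u0 : 0 <= u by rewrite /u subr_ge0.
have a0 : 0 <= a by rewrite /a !mulr_ge0 // ltW.
have b0 : 0 <= b by rewrite /b !mulr_ge0 // ltW.
have Lr0 : 0 <= L * rho by rewrite mulr_ge0 // ltW.
have Lg2 : 0 <= L * gamma ^+ 2 by rewrite mulr_ge0 ?sqr_ge0 // ltW.
have G2 : 0 <= gamma * G ^+ 2 by rewrite mulr_ge0 ?sqr_ge0 // ltW.
have S1 : - gamma * (G ^+ 2 + P) + L / 2 * (gamma ^+ 2 * H2)
          <= - gamma * G ^+ 2 + gamma * (G * s) + L * gamma ^+ 2 * (G ^+ 2 + s ^+ 2).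
  rewrite HE.
  have : gamma * (- P) <= gamma * (G * s) by rewrite ler_pM2l //; lra.
  have : L * gamma ^+ 2 * P <= L * gamma ^+ 2 * (G * s).
    exact: mulLe Lg2 P2.
  have : 2 * (G * s) <= G ^+ 2 + s ^+ 2.
    have := sqr_ge0 (G - s); rewrite sqrrB; lra.
  nra.
have S2 : G * s <= a * G ^+ 2 + b * G.
  have : G * s <= G * (a * G + b) by rewrite ler_wpM2l.
  rewrite /a /b /u; lra.
have S3 : b * G <= L * rho * lambda ^+ 2 + L * rho / 4 * G ^+ 2.
  have := sqr_ge0 (lambda - G / 2).
  rewrite /b; nra.
have S4 : s ^+ 2 <= 2 * a ^+ 2 * G ^+ 2 + 2 * b ^+ 2.
  have : s ^+ 2 <= (a * G + b) ^+ 2.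
    by rewrite ler_sqr ?nnegrE // ?addr_ge0 ?mulr_ge0 // /a /b /u; lra.
  have := sqr_ge0 (a * G - b). rewrite sqrrB sqrrD; nra.
have gb' : L * gamma * (1 + 2 * a ^+ 2) <= 1 / 2 - L * rho / 2 - L * rho * u ^+ 2.
  move: gb; rewrite /a /u; nra.
have key : - 1 + a + L * rho / 4 + L * gamma * (1 + 2 * a ^+ 2) <= - (1 / 2).
  have := sqr_ge0 (u - 1/2).
  move: gb'; rewrite /a; nra.
have g2 : 0 <= gamma * L * gamma by rewrite !mulr_ge0 // ltW.
have E2 : b ^+ 2 = L ^+ 2 * rho ^+ 2 * lambda ^+ 2 by rewrite /b; ring.
apply: (le_trans S1).
have : gamma * (G * s) <= gamma * (a * G ^+ 2 + L * rho * lambda ^+ 2 + L * rho / 4 * G ^+ 2).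
  rewrite ler_pM2l //; lra.
have : L * gamma ^+ 2 * s ^+ 2 <= L * gamma ^+ 2 * (2 * a ^+ 2 * G ^+ 2 + 2 * b ^+ 2).
  exact: mulLe Lg2 S4.
have : gamma * G ^+ 2 * (- 1 + a + L * rho / 4 + L * gamma * (1 + 2 * a ^+ 2)) <= gamma * G ^+ 2 * (- (1 / 2)).
  exact: mulLe G2 key.
rewrite E2.
nra.
Qed.


Lemma smooth_avg {R : realType} {d n : nat} (gi : 'I_n -> 'rV[R]_d -> 'rV[R]_d) gf (L : 'I_n -> R) Lm :
  (0 < n)%N ->
  (forall x v, dotv (gf x) v = n%:R^-1 * \sum_(i < n) dotv (gi i x) v) ->
  (forall i, smooth_grad (gi i) (L i)) -> (forall i, L i <= Lm) -> 0 <= Lm ->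
  smooth_grad gf Lm.
Proof.
move=> n0 hav hs hL Lm0 x y.
set w := gf x - gf y.
have ew := enorm_ge0 w.
have exy := enorm_ge0 (x - y).
have H : dotv w w <= Lm * enorm (x - y) * enorm w.
  rewrite {1}/w dotvBl !hav -mulrBr -sumrB.
  have nR : (0 : R) < n%:R by rewrite ltr0n.
  have -> : Lm * enorm (x - y) * enorm w = n%:R^-1 * \sum_(i < n) (Lm * enorm (x - y) * enorm w).
    rewrite sumr_const card_ord -[_ *+ n]mulr_natr; field; by rewrite gt_eqF.
  apply: mulLe; first by rewrite invr_ge0 ltW.
  apply: ler_sum => i _.
  rewrite -dotvBl.
  apply: (le_trans (CS _ _)).
  have := hs i x y; have := hL i; have := enorm_ge0 (gi i x - gi i y).
  move=> h3 h2 h1.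
  have := mulLe ew h1. have := mulLe (mulr_ge0 exy ew) h2. nra.
have [w0|wpos] := eqVneq (enorm w) 0.
  by rewrite w0 mulr_ge0.
have wp : 0 < enorm w by rewrite lt_neqAle eq_sym wpos ew.
rewrite -enorm_sqr expr2 in H.
by rewrite -(ler_pM2r wp).
Qed.

Lemma usam_one {R : realType} {d : nat} (f : 'rV[R]_d -> R) g L mu rho gamma lambda xstar x :
  is_gradient f g -> smooth_grad g L -> 0 < L -> PL f g mu xstar ->
  0 <= lambda -> lambda <= 1 -> 0 <= rho -> 0 < gamma ->
  gamma * (2 * L * (2 * L ^+ 2 * rho ^+ 2 * (1 - lambda) ^+ 2 + 1))
     <= 1 - L * rho * (1 + 2 * (1 - lambda) ^+ 2) ->
  f (usam_step g gamma rho lambda x) - f xstar <=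
    (1 - gamma * mu) * (f x - f xstar)
    + gamma * (L * rho * (1 + 2 * gamma * L ^+ 2 * rho) * lambda ^+ 2).
Proof.
move=> hg sg L0 pl l0 l1 r0 g0 gb.
rewrite /usam_step.
set gx := g x. set G := enorm gx.
set al := rho * (1 - lambda + lambda / G).
set h := g (x + al *: gx).
set e := h - gx. set s := enorm e.
have G0 : 0 <= G := enorm_ge0 gx.
have s0 : 0 <= s := enorm_ge0 e.
have al0 : 0 <= al.
  by rewrite /al mulr_ge0 // addr_ge0 ?subr_ge0 // mulr_ge0 // invr_ge0.
have alG : al * G <= rho * (1 - lambda) * G + rho * lambda.
  have [->|Gn] := eqVneq G 0; first by rewrite !mulr0 add0r mulr_ge0.
  suff -> : al * G = rho * (1 - lambda) * G + rho * lambda by [].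
  by rewrite /al; field.
have sb : s <= L * rho * (1 - lambda) * G + L * rho * lambda.
  have := sg (x + al *: gx) x.
  rewrite -/h -/gx -/e -/s addrAC subrr add0r enormZ (ger0_norm al0) -/G => H.
  apply: (le_trans H).
  have := mulLe (ltW L0) alG. lra.
have P1 := CSabs gx e.
have P2 := CS gx e.
have hE : h = gx + e by rewrite /e addrC subrK.
clearbody e.
have desc := descent f g L hg sg (ltW L0) x (x - gamma *: h).
have E1 : x - gamma *: h - x = - (gamma *: h).
  by rewrite addrC addrA addNr add0r.
rewrite E1 dotvNr dotvZr enormN enormZ (ger0_norm (ltW g0)) in desc.
have H2E : dotv h h = G ^+ 2 + 2 * dotv gx e + s ^+ 2.
  rewrite hE !(dotvDl, dotvDr) -!enorm_sqr -/G -/s (dotvC e gx); ring.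
have HgE : dotv gx h = G ^+ 2 + dotv gx e.
  by rewrite hE dotvDr -enorm_sqr.
have RS := @real_step R G s (dotv gx e) (dotv h h) L rho lambda gamma G0 s0 P1 P2 H2E sb L0 r0 l0 l1 g0 gb.
have plx := pl x. rewrite -/gx -/G in plx.
move: desc; rewrite HgE exprMn enorm_sqr => desc.
have D2 : dotv gx gx = G ^+ 2 by rewrite enorm_sqr.
have D3 : enorm h ^+ 2 = dotv h h := enorm_sqr h.
rewrite D2 D3 in desc.
have gh : 0 <= gamma / 2 by rewrite divr_ge0 // ltW.
have := mulLe gh plx.
nra.
Qed.

Theorem corollary3p4 (R : realType) (d n : nat)
  (fi : 'I_n -> 'rV[R]_d -> R) (gi : 'I_n -> 'rV[R]_d -> 'rV[R]_d) (L : 'I_n -> R)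
  (f : 'rV[R]_d -> R) (gf : 'rV[R]_d -> 'rV[R]_d)
  (mu lambda rho gamma : R) (xstar : 'rV[R]_d) (x : nat -> 'rV[R]_d) :
  (0 < n)%N ->
  (forall i, is_gradient (fi i) (gi i)) ->
  (forall i, lower_bounded (fi i)) ->
  (forall i, 0 <= L i) ->
  (forall i, smooth_grad (gi i) (L i)) ->
  f = (fun y => n%:R^-1 * \sum_(i < n) fi i y) ->
  is_gradient f gf ->
  (forall y, f xstar <= f y) ->
  0 < mu ->
  PL f gf mu xstar ->
  0 <= lambda <= 1 ->
  let Lmax := \big[Num.max/0]_(i < n) L i in
  0 <= rho ->
  rho <= (Lmax * (1 + 2 * (1 - lambda) ^+ 2))^-1 ->
  0 < gamma ->
  gamma <= (1 - Lmax * rho * (1 + 2 * (1 - lambda) ^+ 2))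
           / (2 * Lmax * (2 * Lmax ^+ 2 * rho ^+ 2 * (1 - lambda) ^+ 2 + 1)) ->
  (forall t, x t.+1 = usam_step gf gamma rho lambda (x t)) ->
  forall t : nat,
    f (x t) - f xstar <=
      (1 - gamma * mu) ^+ t * (f (x 0%N) - f xstar)
      + Lmax * rho * (1 + 2 * gamma * Lmax ^+ 2 * rho) * lambda ^+ 2 / mu.
Proof.
move=> n0 hgi _ hL0 hsi fE hgf hmin mu0 pl /andP[l0 l1] Lmax r0 rb g0 gb hx.
have LiLe : forall i, L i <= Lmax by move=> i; exact: le_bigmax.
have Lm0 : 0 <= Lmax := le_trans (hL0 (Ordinal n0)) (LiLe (Ordinal n0)).
have Lpos : 0 < Lmax.
  rewrite lt_neqAle Lm0 andbT; apply/negP => /eqP L0.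
  move: gb; rewrite -L0 mulr0 mul0r invr0 mulr0; lra.
have sm : smooth_grad gf Lmax.
  exact: (smooth_avg gi gf L Lmax n0 (grad_avg fi gi f gf hgi fE hgf) hsi LiLe Lm0).
have dpos : 0 < 2 * Lmax * (2 * Lmax ^+ 2 * rho ^+ 2 * (1 - lambda) ^+ 2 + 1).
  have := sqr_ge0 (Lmax * rho * (1 - lambda)).
  have : 0 < 2 * Lmax by lra.
  move=> h1 h2; apply: mulr_gt0 => //; nra.
have gb' := gb; rewrite ler_pdivlMr // in gb'.
set C := Lmax * rho * (1 + 2 * gamma * Lmax ^+ 2 * rho) * lambda ^+ 2.
have C0 : 0 <= C.
  have h1 := sqr_ge0 Lmax. have h2 := sqr_ge0 lambda.
  have h3 : 0 <= gamma * Lmax ^+ 2 * rho by rewrite !mulr_ge0 // ltW.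
  have h4 : 0 <= Lmax * rho by rewrite mulr_ge0.
  rewrite /C; apply: mulr_ge0 => //; apply: mulr_ge0 => //; lra.
have step : forall t, f (x t.+1) - f xstar <= (1 - gamma * mu) * (f (x t) - f xstar) + gamma * C.
  move=> t; rewrite hx; exact: usam_one hgf sm Lpos pl l0 l1 r0 g0 gb'.
have D0 : forall y, 0 <= f y - f xstar by move=> y; rewrite subr_ge0.
have [muL|Lmu] := lerP mu Lmax.
  have gm : 0 <= 1 - gamma * mu.
    have : gamma * (2 * Lmax) <= 1.
      move: gb'; have := sqr_ge0 (Lmax * rho * (1 - lambda)).
      have := sqr_ge0 (1 - lambda). 
      have : 0 <= Lmax * rho by rewrite mulr_ge0.
      nra.
    have := mulLe (ltW g0) muL. nra.
  elim => [|t IH]; first by rewrite expr0 mul1r lerDl divr_ge0 // ltW.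
  apply: (le_trans (step t)).
  have := mulLe gm IH.
  have E : gamma * C = (1 - (1 - gamma * mu)) * (C / mu) by field; rewrite gt_eqF.
  rewrite E exprS; nra.
(* mu > Lmax : f is constant at its minimum *)
have Dz : forall y, f y - f xstar <= 0.
  move=> y.
  have Li : 0 < Lmax^-1 by rewrite invr_gt0.
  have des := descent f gf Lmax hgf sm Lm0 y (y - Lmax^-1 *: gf y).
  have E1 : y - Lmax^-1 *: gf y - y = - (Lmax^-1 *: gf y).
    by rewrite addrC addrA addNr add0r.
  rewrite E1 dotvNr dotvZr enormN enormZ (ger0_norm (ltW Li)) in des.
  rewrite -enorm_sqr in des.
  have := hmin (y - Lmax^-1 *: gf y).
  have := pl y.
  set G := enorm (gf y) in des *.
  move=> ply hm.
  have : G ^+ 2 <= 2 * Lmax * (f y - f xstar).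
    have E2 : Lmax / 2 * (Lmax^-1 * G) ^+ 2 = Lmax^-1 * G ^+ 2 / 2.
      by field; rewrite gt_eqF.
    rewrite E2 in des.
    have : Lmax^-1 * G ^+ 2 / 2 <= f y - f xstar by lra.
    move=> H; have H2 : 0 <= 2 * Lmax by lra.
    have := mulLe H2 H.
    have -> : 2 * Lmax * (Lmax^-1 * G ^+ 2 / 2) = G ^+ 2 by field; rewrite gt_eqF.
    by [].
  move=> H.
  have := D0 y.
  nra.
move=> t.
have -> : f (x 0%N) - f xstar = 0 by apply/eqP; rewrite eq_le Dz D0.
rewrite mulr0 add0r.
apply: (le_trans (Dz _)).
by rewrite divr_ge0 // ltW.
Qed.
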